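(* Let $\tau$ be an LOSR-free transformation which takes bipartite resources of one type to bipartite resources of another type, in one of the following three cases: (1) from type $\mathsf{CC}\to\mathsf{CC}$ (boxes) to type $\mathsf{II}\to\mathsf{QQ}$ (states); (2) from type $\mathsf{CC}\to\mathsf{CC}$ (boxes) to type $\mathsf{CI}\to\mathsf{CQ}$ (steering assemblages); (3) from type $\mathsf{CI}\to\mathsf{CQ}$ (steering assemblages) to type $\mathsf{II}\to\mathsf{QQ}$ (states). Then for every resource $R$ of the initial type (of any dimensions), the resource $\tau[R]$ is LOSR-free.
   Context: A system has a dimension and a type in $\{\mathsf{I},\mathsf{C},\mathsf{Q}\}$ (trivial, i.e. dimension 1; classical; quantum). A bipartite resource with Alice's input/output $\mathcal{X},\mathcal{A}$ and Bob's input/output $\mathcal{Y},\mathcal{B}$ is a completely positive linear map $R$ from operators on $\mathcal{X}\otimes\mathcal{Y}$ to operators on $\mathcal{A}\otimes\mathcal{B}$ with $\mathrm{tr}R[\xi\otimes\psi]=1$ for all density matrices $\xi,\psi$, nonsignaling in both directions ($\mathrm{tr}_{\mathcal{A}}R[\xi\otimes\psi]$ independent of $\xi$, $\mathrm{tr}_{\mathcal{B}}R[\xi\otimes\psi]$ independent of $\psi$), and satisfying classicality constraints: for a classical output $\mathcal{A}$, $\langle i|R[\xi\otimes\psi]|j\rangle_{\mathcal{A}}=0$ for $i\neq j$; for a classical input $\mathcal{X}$, $R[|i\rangle\langle j|\otimes\psi]=0$ for $i\ne j$ (analogously for Bob). Its type is $\mathsf{T}[\mathcal{X}]\mathsf{T}[\mathcal{Y}]\to\mathsf{T}[\mathcal{A}]\mathsf{T}[\mathcal{B}]$.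 A resource is LOSR-free if it equals $\sum_i p_i R^i_{\mathcal{A}|\mathcal{X}}\otimes R^i_{\mathcal{B}|\mathcal{Y}}$ for a probability distribution $(p_i)$ and single-party channels (CPTP maps respecting the classicality of their input/output). An LOSR-free transformation from resources with systems $\mathcal{X}\mathcal{Y}\to\mathcal{A}\mathcal{B}$ to resources with systems $\mathcal{X}'\mathcal{Y}'\to\mathcal{A}'\mathcal{B}'$ is a map of the form $\tau[R]=\sum_\lambda p_\lambda\,(\mathcal{E}^\lambda_{\mathcal{A}}\otimes\mathcal{E}^\lambda_{\mathcal{B}})\circ(R\otimes\mathrm{id}_{\mathcal{M}_A\mathcal{M}_B})\circ(\mathcal{P}^\lambda_{\mathcal{A}}\otimes\mathcal{P}^\lambda_{\mathcal{B}})$, i.e. a convex mixture of products of local supermaps, where $\mathcal{P}^\lambda_{\mathcal{A}}$ is a channel from $\mathcal{X}'$ to $\mathcal{X}\otimes\mathcal{M}_A$, $\mathcal{E}^\lambda_{\mathcal{A}}$ is a channel from $\mathcal{A}\otimes\mathcal{M}_A$ to $\mathcal{A}'$ (with local memory $\mathcal{M}_A$), similarly for Bob, such that $\tau$ maps resources of the initial type to resources of the target type. *)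

(* Defs.v *)
From HB Require Import structures.
From mathcomp Require Import all_boot all_order all_algebra.
From mathcomp Require Import reals.
From mathcomp.real_closed Require Import complex.
Set Implicit Arguments.
Unset Strict Implicit.
Unset Printing Implicit Defensive.
Import Order.TTheory GRing.Theory Num.Theory.
Local Open Scope ring_scope.

(* System types: trivial, classical, quantum. *)
Inductive kind := KI | KC | KQ.

(* A system of kind k carried by the finite index type I (basis of the
   Hilbert space C^I).  A trivial system has dimension 1; other systems
   have positive dimension. *)
Definition systype (k : kind) (I : finType) : Prop :=
  match k with KI => #|I| = 1%N | _ => (0 < #|I|)%N end.

Section Quantum.
Variable R : realType.
Local Notation C := R[i].

Definition op (I : finType) := I -> I -> C.

Definition tr (I : finType) (Z : op I) : C := \sum_(i : I) Z i i.

Definition psd (I : finType) (Z : op I) : Prop :=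
  forall v : I -> C, 0 <= \sum_(i : I) \sum_(j : I) (v i)^* * Z i j * v j.

Definition density (I : finType) (Z : op I) : Prop := psd Z /\ tr Z = 1.

Definition ketbra (I : finType) (i j : I) : op I :=
  fun a b => ((a == i)%:R * (b == j)%:R : C).

Definition tens (I J : finType) (Z1 : op I) (Z2 : op J) : op (I * J)%type :=
  fun p q => Z1 p.1 q.1 * Z2 p.2 q.2.

Definition ptrA (I J : finType) (Z : op (I * J)%type) : op J :=
  fun j j' => \sum_(i : I) Z (i, j) (i, j').
Definition ptrB (I J : finType) (Z : op (I * J)%type) : op I :=
  fun i i' => \sum_(j : J) Z (i, j) (i', j).

Definition relabel (S S' : finType) (f : S' -> S) (W : op S) : op S' :=
  fun s t => W (f s) (f t).

Definition linmap (I J : finType) (Phi : op I -> op J) : Prop :=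
  forall (c : C) (Z1 Z2 : op I) (a b : J),
    Phi (fun x y => c * Z1 x y + Z2 x y) a b = c * Phi Z1 a b + Phi Z2 a b.

Definition ampl_r (K I J : finType) (Phi : op I -> op J) (P : op (K * I)%type)
  : op (K * J)%type :=
  fun p q => Phi (fun i j => P (p.1, i) (q.1, j)) p.2 q.2.
Definition ampl_l (K I J : finType) (Phi : op I -> op J) (P : op (I * K)%type)
  : op (J * K)%type :=
  fun p q => Phi (fun i j => P (i, p.2) (j, q.2)) p.1 q.1.

Definition maptens (I1 J1 I2 J2 : finType) (Phi : op I1 -> op J1)
  (Psi : op I2 -> op J2) (Z : op (I1 * I2)%type) : op (J1 * J2)%type :=
  ampl_l Phi (ampl_r Psi Z).

Definition CP (I J : finType) (Phi : op I -> op J) : Prop :=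
  forall (k : nat) (P : op ('I_k * I)%type), psd P -> psd (ampl_r Phi P).

Definition TP (I J : finType) (Phi : op I -> op J) : Prop :=
  forall Z : op I, tr (Phi Z) = tr Z.

Definition qchannel (I J : finType) (Phi : op I -> op J) : Prop :=
  [/\ linmap Phi, CP Phi & TP Phi].

Definition channel (kI kO : kind) (I J : finType) (Phi : op I -> op J) : Prop :=
  [/\ qchannel Phi,
      kI = KC -> forall (i j : I) (a b : J), i != j -> Phi (ketbra i j) a b = 0
    & kO = KC -> forall (Z : op I) (a b : J), a != b -> Phi Z a b = 0].

Definition prob (n : nat) (p : 'I_n -> C) : Prop :=
  (forall l, 0 <= p l) /\ \sum_(l < n) p l = 1.

Definition resource (kX kY kA kB : kind) (X Y A B : finType)
  (Rs : op (X * Y)%type -> op (A * B)%type) : Prop :=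
  linmap Rs /\ CP Rs /\
      (forall (xi : op X) (psi : op Y), density xi -> density psi ->
         tr (Rs (tens xi psi)) = 1) /\
      (forall (xi xi' : op X) (psi : op Y), density xi -> density xi' ->
         density psi ->
         forall b b', ptrA (Rs (tens xi psi)) b b' = ptrA (Rs (tens xi' psi)) b b') /\
      (forall (xi : op X) (psi psi' : op Y), density xi -> density psi ->
         density psi' ->
         forall a a', ptrB (Rs (tens xi psi)) a a' = ptrB (Rs (tens xi psi')) a a') /\
      (kA = KC -> forall (xi : op X) (psi : op Y), density xi -> density psi ->
         forall (a a' : A) (b b' : B), a != a' -> Rs (tens xi psi) (a, b) (a', b') = 0) /\
      (kB = KC -> forall (xi : op X) (psi : op Y), density xi -> density psi ->
         forall (a a' : A) (b b' : B), b != b' -> Rs (tens xi psi) (a, b) (a', b') = 0) /\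
      (kX = KC -> forall (x x' : X) (psi : op Y), density psi -> x != x' ->
         forall u v, Rs (tens (ketbra x x') psi) u v = 0) /\
      (kY = KC -> forall (xi : op X) (y y' : Y), density xi -> y != y' ->
         forall u v, Rs (tens xi (ketbra y y')) u v = 0).

Definition LOSR_free (kX kY kA kB : kind) (X Y A B : finType)
  (Rs : op (X * Y)%type -> op (A * B)%type) : Prop :=
  exists (n : nat) (p : 'I_n -> C)
         (RA : 'I_n -> op X -> op A) (RB : 'I_n -> op Y -> op B),
    [/\ prob p,
        forall l, channel kX kA (RA l) /\ channel kY kB (RB l)
      & forall (Z : op (X * Y)%type) (u v : (A * B)%type),
          Rs Z u v = \sum_(l < n) p l * maptens (RA l) (RB l) Z u v].

Definition sw_in (X Y MA MB : finType) (s : (X * Y)%type * (MA * MB)%type)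
  : (X * MA)%type * (Y * MB)%type := ((s.1.1, s.2.1), (s.1.2, s.2.2)).
Definition sw_out (A B MA MB : finType) (s : (A * MA)%type * (B * MB)%type)
  : (A * B)%type * (MA * MB)%type := ((s.1.1, s.2.1), (s.1.2, s.2.2)).

(* tau[R] = sum_l p_l (E_A^l (x) E_B^l) o (R (x) id_{MA MB}) o (P_A^l (x) P_B^l) *)
Definition tau (X Y A B X' Y' A' B' MA MB : finType) (n : nat)
  (p : 'I_n -> C)
  (PA : 'I_n -> op X' -> op (X * MA)%type) (PB : 'I_n -> op Y' -> op (Y * MB)%type)
  (EA : 'I_n -> op (A * MA)%type -> op A') (EB : 'I_n -> op (B * MB)%type -> op B')
  (Rs : op (X * Y)%type -> op (A * B)%type) : op (X' * Y')%type -> op (A' * B')%type :=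
  fun Z u v => \sum_(l < n) p l *
    maptens (EA l) (EB l)
      (relabel (@sw_out A B MA MB)
         (ampl_l Rs (relabel (@sw_in X Y MA MB) (maptens (PA l) (PB l) Z)))) u v.

Definition LOSR_free_transformation
  (kX kY kA kB kX' kY' kA' kB' : kind)
  (X Y A B X' Y' A' B' MA MB : finType) (n : nat) (p : 'I_n -> C)
  (PA : 'I_n -> op X' -> op (X * MA)%type) (PB : 'I_n -> op Y' -> op (Y * MB)%type)
  (EA : 'I_n -> op (A * MA)%type -> op A') (EB : 'I_n -> op (B * MB)%type -> op B')
  : Prop :=
  prob p /\ [/\
      forall l, [/\ qchannel (PA l),
        kX' = KC -> forall (i j : X') u v, i != j -> PA l (ketbra i j) u v = 0
      & kX = KC -> forall (Z : op X') (x x' : X) (m m' : MA), x != x' ->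
          PA l Z (x, m) (x', m') = 0],
      forall l, [/\ qchannel (PB l),
        kY' = KC -> forall (i j : Y') u v, i != j -> PB l (ketbra i j) u v = 0
      & kY = KC -> forall (Z : op Y') (y y' : Y) (m m' : MB), y != y' ->
          PB l Z (y, m) (y', m') = 0],
      forall l, [/\ qchannel (EA l),
        kA = KC -> forall (a a' : A) (sigma : op MA) u v, a != a' ->
          EA l (tens (ketbra a a') sigma) u v = 0
      & kA' = KC -> forall (Z : op (A * MA)%type) (u v : A'), u != v -> EA l Z u v = 0],
      forall l, [/\ qchannel (EB l),
        kB = KC -> forall (b b' : B) (sigma : op MB) u v, b != b' ->
          EB l (tens (ketbra b b') sigma) u v = 0
      & kB' = KC -> forall (Z : op (B * MB)%type) (u v : B'), u != v -> EB l Z u v = 0]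
    &
      forall Rs : op (X * Y)%type -> op (A * B)%type, resource kX kY kA kB Rs ->
        resource kX' kY' kA' kB' (tau p PA PB EA EB Rs)].

End Quantum.

Definition prop2_case (kX kY kA kB kX' kY' kA' kB' : kind) : Prop :=
  [\/ [/\ kX = KC, kY = KC, kA = KC & kB = KC] /\
      [/\ kX' = KI, kY' = KI, kA' = KQ & kB' = KQ],
      [/\ kX = KC, kY = KC, kA = KC & kB = KC] /\
      [/\ kX' = KC, kY' = KI, kA' = KC & kB' = KQ]
    | [/\ kX = KC, kY = KI, kA = KC & kB = KQ] /\
      [/\ kX' = KI, kY' = KI, kA' = KQ & kB' = KQ]].

(* Main.v *)
Require Import Defs.
From HB Require Import structures.
From mathcomp Require Import all_boot all_order all_algebra.
From mathcomp Require Import reals.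
From mathcomp.real_closed Require Import complex.
From Stdlib Require Import FunctionalExtensionality.
From mathcomp Require Import ring.
Set Implicit Arguments.
Unset Strict Implicit.
Unset Printing Implicit Defensive.
Import Order.TTheory GRing.Theory Num.Theory.
Local Open Scope ring_scope.

Section Q.
Variable R : realType.
Local Notation C := R[i].
Local Notation op := (op R).

Lemma opE (I : finType) (W W' : op I) : (forall i j, W i j = W' i j) -> W = W'.
Proof.
move=> h; apply: functional_extensionality => i.
by apply: functional_extensionality => j.
Qed.

Lemma sum_delta_r (I : finType) (F : I -> C) d : \sum_i F i * (i == d)%:R = F d.
Proof.
rewrite (bigD1 d) //= eqxx mulr1 big1 ?addr0 // => i /negbTE ->; by rewrite mulr0.
Qed.

Lemma sum_delta_l (I : finType) (F : I -> C) d : \sum_i (i == d)%:R * F i = F d.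
Proof.
rewrite (bigD1 d) //= eqxx mul1r big1 ?addr0 // => i /negbTE ->; by rewrite mul0r.
Qed.

Definition qf (I : finType) (S : op I) (v : I -> C) :=
  \sum_i \sum_j (v i)^* * S i j * v j.

Lemma psdE (I : finType) (S : op I) : psd S <-> forall v, 0 <= qf S v.
Proof. by []. Qed.

Lemma qf_shift (I : finType) (S : op I) v d (a : C) :
  qf S (fun k => v k - a * (k == d)%:R) =
  qf S v - a * (\sum_i (v i)^* * S i d) - a^* * (\sum_j S d j * v j)
   + a^* * a * S d d.
Proof.
rewrite /qf.
have inner : forall (X : C) i, \sum_j X * S i j * (v j - a * (j == d)%:R)
   = X * (\sum_j S i j * v j - a * S i d).
  move=> X i; transitivity (X * \sum_j S i j * (v j - a * (j == d)%:R)).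
    by rewrite mulr_sumr; apply: eq_bigr => j _; rewrite mulrA.
  congr (_ * _); under eq_bigr => j _ do rewrite mulrBr.
  rewrite sumrB; congr (_ - _).
  under eq_bigr => j _ do rewrite mulrCA.
  by rewrite -mulr_sumr sum_delta_r.
under eq_bigr => i _ do rewrite inner.
under eq_bigr => i _ do rewrite rmorphB rmorphM /= rmorph_nat mulrBl.
rewrite sumrB.
under eq_bigr => i _ do rewrite mulrBr.
rewrite sumrB.
under [X in _ - _ - X]eq_bigr => i _ do rewrite mulrAC.
rewrite (sum_delta_r (fun i => (a^* * (\sum_j S i j * v j - a * S i d)))).
under [X in X - _ - _]eq_bigr => i _ do rewrite mulr_sumr.
under eq_bigr => i _ do under eq_bigr => j _ do rewrite mulrA.
under [X in _ - X - _]eq_bigr => i _ do rewrite mulrCA.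
rewrite -mulr_sumr mulrBr opprB addrA.
by rewrite mulrA addrAC.
Qed.

Lemma qf_delta (I : finType) (S : op I) i :
  qf S (fun k => (k == i)%:R) = S i i.
Proof.
rewrite /qf (bigD1 i) //= [X in _ + X]big1 ?addr0; last first.
  move=> k /negbTE ->; by rewrite big1 // => j _; rewrite rmorph0 !mul0r.
rewrite eqxx rmorph1 (bigD1 i) //= [X in _ + X]big1 ?addr0; last first.
  by move=> k /negbTE ->; rewrite mulr0.
by rewrite eqxx mul1r mulr1.
Qed.

Lemma qf_shift_delta (I : finType) (S : op I) i d (a : C) :
  qf S (fun k => (k == i)%:R - a * (k == d)%:R) =
  S i i - a * S i d - a^* * S d i + a^* * a * S d d.
Proof.
rewrite (qf_shift S (fun k => (k == i)%:R)) qf_delta.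
congr (_ - _ * _ - _ * _ + _).
  under eq_bigr => k _ do rewrite rmorph_nat.
  by rewrite sum_delta_l.
by rewrite sum_delta_r.
Qed.

Lemma qf0 (I : finType) (S : op I) : qf S (fun _ => 0) = 0.
Proof. by rewrite /qf big1 // => i _; rewrite big1 // => j _; rewrite mulr0. Qed.

Lemma psd_diag (I : finType) (S : op I) d : psd S -> 0 <= S d d.
Proof. by move=> hS; have := hS (fun k => (k == d)%:R); rewrite -/(qf _ _) qf_delta. Qed.

Lemma psd_herm (I : finType) (S : op I) i j : psd S -> S j i = (S i j)^*.
Proof.
move=> hS.
have hii := geC0_conj (psd_diag i hS); have hjj := geC0_conj (psd_diag j hS).
have [<-|nij] := eqVneq i j; first by rewrite hii.
have h1 := geC0_conj (hS (fun k => (k == i)%:R - (-1) * (k == j)%:R)).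
have h2 := geC0_conj (hS (fun k => (k == i)%:R - (- 'i) * (k == j)%:R)).
rewrite -/(qf _ _) qf_shift_delta in h1.
rewrite -/(qf _ _) qf_shift_delta in h2.
set x := S i j in h1 h2 *; set y := S j i in h1 h2 *.
move: h1 h2; rewrite !(rmorphD, rmorphN, rmorphM) /= !rmorph1 ?rmorphN !conjCi hii hjj.
set xc := x^*; set yc := y^*; move=> e1 e2.
have e3 : 'i^+2 = -1 :> R[i] by exact: sqrCi.
have ci : (- 'i)^* = 'i :> R[i] by rewrite rmorphN /= conjCi opprK.
rewrite ci in e2.
move/eqP: e1; rewrite -subr_eq0 => /eqP e1.
move/eqP: e2; rewrite -subr_eq0 => /eqP e2.
move/eqP: e3; rewrite -subr_eq0 opprK => /eqP e3.
apply/eqP; rewrite -subr_eq0; apply/eqP.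
match type of e1 with ?D1 = 0 => match type of e2 with ?D2 = 0 =>
  match type of e3 with ?D3 = 0 =>
  transitivity (-(1/2) * (D1 + 'i * D2) + (1/2) * D3 * (- xc + yc - x + y)) end end end.
  field.
by [].
by rewrite e1 e2 e3 !(mulr0, mul0r, addr0).
Qed.

Lemma psd_row0 (I : finType) (S : op I) d j : psd S -> S d d = 0 -> S d j = 0.
Proof.
move=> hS hdd.
have [->//|njd] := eqVneq j d.
apply/eqP; apply/negP => /negP bn0.
set b := S d j in bn0 *.
set m := b * b^*.
have m0 : m != 0 by rewrite /m mul_conjC_eq0.
have mc : m^* = m by apply: geC0_conj; exact: mul_conjC_ge0.
set s := S j j.
have s0 : 0 <= s by exact: psd_diag.
have sc : s^* = s by apply: geC0_conj.
set a := b * ((s + 1) / m).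
have hv := hS (fun k => (k == j)%:R - a * (k == d)%:R).
rewrite -/(qf _ _) qf_shift_delta hdd mulr0 addr0 (psd_herm d j hS) -/b -/s in hv.
have e1 : a * b^* = s + 1.
  have -> : a * b^* = (s + 1) * (m / m) by rewrite /a /m; ring.
  by rewrite mulfV // mulr1.
have e2 : a^* * b = s + 1.
  have -> : a^* * b = (s + 1) * (m / m).
    rewrite /a rmorphM /= rmorphM /= fmorphV /= rmorphD /= rmorph1 sc mc /m; ring.
  by rewrite mulfV // mulr1.
rewrite e1 e2 in hv.
have : s - (s + 1) - (s + 1) < 0.
  have -> : s - (s + 1) - (s + 1) = - (s + 2) by ring.
  rewrite oppr_lt0; apply: ltr_wpDl => //.
by move=> h; have := lt_le_trans h hv; rewrite ltxx.
Qed.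

Lemma psd_tr0 (I : finType) (S : op I) : psd S -> tr S = 0 -> forall i j, S i j = 0.
Proof.
move=> hS htr i j; apply: psd_row0 => //.
move/eqP: htr; rewrite psumr_eq0 => [/allP h|k _]; last exact: psd_diag.
by apply/eqP; apply: h; rewrite mem_index_enum.
Qed.

Lemma psd_schur (I : finType) (S : op I) d : psd S -> S d d != 0 ->
  psd (fun i j => S i j - S i d * S d j / S d d).
Proof.
move=> hS hd v.
change (0 <= qf (fun i j => S i j - S i d * S d j / S d d) v).
set beta := \sum_j S d j * v j.
have hdc : (S d d)^* = S d d by apply: geC0_conj; exact: psd_diag.
have gam : \sum_i (v i)^* * S i d = beta^*.
  rewrite /beta rmorph_sum; apply: eq_bigr => i _.
  by rewrite rmorphM /= -(psd_herm d i hS) mulrC.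
have := hS (fun k => v k - (beta / S d d) * (k == d)%:R).
rewrite -/(qf _ _) qf_shift gam rmorphM /= fmorphV /= hdc.
suff -> : qf (fun i j => S i j - S i d * S d j / S d d) v = qf S v - beta / S d d * beta^* - beta^* / S d d * beta +
   beta^* / S d d * (beta / S d d) * S d d by [].
have -> : beta^* / S d d * (beta / S d d) * S d d = beta^* * beta / S d d.
  by field.
rewrite /qf.
have -> : \sum_i \sum_j (v i)^* * (S i j - S i d * S d j / S d d) * v j =
  \sum_i \sum_j (v i)^* * S i j * v j - \sum_i \sum_j (v i)^* * (S i d * S d j / S d d) * v j.
  rewrite -sumrB; apply: eq_bigr => i _; rewrite -sumrB; apply: eq_bigr => j _.
  by rewrite mulrBr mulrBl.
have -> : \sum_i \sum_j (v i)^* * (S i d * S d j / S d d) * v j = beta^* * beta / S d d.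
  rewrite -gam mulr_suml mulr_suml; apply: eq_bigr => i _.
  rewrite /beta mulr_sumr mulr_suml; apply: eq_bigr => j _; ring.
set q := \sum_i _; ring.
Qed.

Lemma psd_decomp_aux (I : finType) (s : seq I) : forall S : op I, psd S ->
  (forall i j, i \notin s -> S i j = 0) ->
  exists l : seq (I -> C), forall i j, S i j = \sum_(u <- l) u i * (u j)^*.
Proof.
elim: s => [|d s IH] S hS hsupp.
  by exists [::] => i j; rewrite big_nil hsupp.
have [hd0|hd] := eqVneq (S d d) 0.
  apply: IH => // i j his; have [->|nid] := eqVneq i d; first exact: psd_row0.
  by apply: hsupp; rewrite inE negb_or nid.
have hs' : forall i j, i \notin s -> S i j - S i d * S d j / S d d = 0.
  move=> i j his; have [->|nid] := eqVneq i d; first by field.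
  have hn : i \notin d :: s by rewrite inE negb_or nid.
  by rewrite (hsupp i j hn) (hsupp i d hn) mul0r mul0r subr0.
have [l hl] := IH _ (psd_schur hS hd) hs'.
exists ((fun k => sqrtC ((S d d)^-1) * S k d) :: l) => i j.
rewrite big_cons -hl.
have hdc : 0 <= (S d d)^-1 by rewrite invr_ge0; exact: psd_diag.
rewrite rmorphM /= (geC0_conj (x := sqrtC _)) ?sqrtC_ge0 //.
rewrite -(psd_herm j d hS).
have e : sqrtC (S d d)^-1 * sqrtC (S d d)^-1 = (S d d)^-1 by rewrite -expr2 sqrtCK.
have -> : sqrtC (S d d)^-1 * S i d * (sqrtC (S d d)^-1 * S d j) =
   (sqrtC (S d d)^-1 * sqrtC (S d d)^-1) * S i d * S d j by ring.
rewrite e; ring.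
Qed.

Lemma psd_decomp (I : finType) (S : op I) : psd S ->
  exists l : seq (I -> C), forall i j, S i j = \sum_(u <- l) u i * (u j)^*.
Proof.
move=> hS; apply: (psd_decomp_aux (s := enum I)) => // i j.
by rewrite mem_enum.
Qed.

Lemma sum_pair (I J : finType) (F : (I * J)%type -> C) :
  \sum_p F p = \sum_i \sum_j F (i, j).
Proof. by rewrite pair_bigA; apply: eq_bigr => -[]. Qed.

Lemma psd_tens (I J : finType) (S1 : op I) (S2 : op J) :
  psd S1 -> psd S2 -> psd (tens S1 S2).
Proof.
move=> h1 h2; have [L hL] := psd_decomp h2 => v.
pose w (u : J -> C) i := \sum_l (u l)^* * v (i, l).
suff -> : \sum_p \sum_q (v p)^* * tens S1 S2 p q * v q = \sum_(u <- L) qf S1 (w u).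
  by apply: sumr_ge0 => u _; apply: h1.
rewrite /tens sum_pair.
under eq_bigr => i _ do under eq_bigr => k _ do rewrite sum_pair /=.
under eq_bigr => i _ do under eq_bigr => k _ do under eq_bigr => j _ do
  under eq_bigr => l _ do rewrite hL mulr_sumr mulr_sumr mulr_suml.
under eq_bigr => i _ do under eq_bigr => k _ do under eq_bigr => j _ do
  rewrite exchange_big.
under eq_bigr => i _ do under eq_bigr => k _ do rewrite exchange_big.
under eq_bigr => i _ do rewrite exchange_big.
rewrite exchange_big (eq_bigr (fun u => qf S1 (w u))) // => u _.
rewrite /qf; apply eq_bigr; move=> i _.
rewrite exchange_big; apply: eq_bigr => j _.
rewrite /w rmorph_sum mulr_suml mulr_suml; apply: eq_bigr => k _.
rewrite mulr_sumr; apply: eq_bigr => l _.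
rewrite rmorphM /= conjCK; ring.
Qed.

End Q.

Section L.
Variable R : realType.
Local Notation C := R[i].
Local Notation op := (op R).

Section Lin.
Variables (I J : finType) (F : op I -> op J).
Hypothesis hF : linmap F.

Lemma lin_fun (c : C) Z1 Z2 :
  F (fun x y => c * Z1 x y + Z2 x y) = fun a b => c * F Z1 a b + F Z2 a b.
Proof. by apply: opE => a b; apply: hF. Qed.

Lemma lin0 : F (fun _ _ => 0) = fun _ _ => 0.
Proof.
apply: opE => a b.
have := hF 1 (fun _ _ => 0) (fun _ _ => 0) a b.
have -> : (fun x y : I => 1 * (fun _ _ : I => (0:C)) x y + (fun _ _ : I => 0) x y) = (fun _ _ => 0).
  by apply: opE => x y; rewrite mulr0 addr0.
rewrite mul1r => h.
by apply: (addrI (F (fun _ _ => 0) a b)); rewrite addr0 -h.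
Qed.

Lemma linZ (c : C) Z : F (fun x y => c * Z x y) = fun a b => c * F Z a b.
Proof.
have := lin_fun c Z (fun _ _ => 0); rewrite lin0.
have -> : (fun x y => c * Z x y + (fun _ _ : I => (0:C)) x y) = (fun x y => c * Z x y).
  by apply: opE => x y; rewrite addr0.
move=> ->; apply: opE => a b; by rewrite addr0.
Qed.

Lemma linD Z1 Z2 : F (fun x y => Z1 x y + Z2 x y) = fun a b => F Z1 a b + F Z2 a b.
Proof.
have := lin_fun 1 Z1 Z2.
have -> : (fun x y => 1 * Z1 x y + Z2 x y) = (fun x y => Z1 x y + Z2 x y).
  by apply: opE => x y; rewrite mul1r.
move=> ->; apply: opE => a b; by rewrite mul1r.
Qed.

Lemma lin_sum (T : Type) (r : seq T) (c : T -> C) (K : T -> op I) :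
  F (fun x y => \sum_(t <- r) c t * K t x y) = fun a b => \sum_(t <- r) c t * F (K t) a b.
Proof.
elim: r => [|t r IH].
  have -> : (fun x y : I => \sum_(t <- [::]) c t * K t x y) = (fun _ _ => 0).
    by apply: opE => x y; rewrite big_nil.
  by rewrite lin0; apply: opE => a b; rewrite big_nil.
have -> : (fun x y : I => \sum_(t0 <- t :: r) c t0 * K t0 x y) =
   (fun x y => c t * K t x y + (fun x y => \sum_(t0 <- r) c t0 * K t0 x y) x y).
  by apply: opE => x y; rewrite big_cons.
by rewrite lin_fun IH; apply: opE => a b; rewrite big_cons.
Qed.

Lemma lin_ext_pt Z1 Z2 : (forall x y, Z1 x y = Z2 x y) -> F Z1 = F Z2.
Proof. by move=> h; rewrite (opE h). Qed.

End Lin.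

Lemma linmap_comp (I J K : finType) (F : op I -> op J) (G : op J -> op K) :
  linmap F -> linmap G -> linmap (fun Z => G (F Z)).
Proof. by move=> hF hG c Z1 Z2 a b; rewrite (lin_fun hF) hG. Qed.

Lemma linmap_relabel (S S' : finType) (f : S' -> S) : linmap (@relabel R S S' f).
Proof. by []. Qed.

Lemma linmap_ampl_r (K I J : finType) (F : op I -> op J) :
  linmap F -> linmap (@ampl_r R K I J F).
Proof. by move=> hF c Z1 Z2 a b; rewrite /ampl_r hF. Qed.

Lemma linmap_ampl_l (K I J : finType) (F : op I -> op J) :
  linmap F -> linmap (@ampl_l R K I J F).
Proof. by move=> hF c Z1 Z2 a b; rewrite /ampl_l hF. Qed.

Lemma linmap_maptens (I1 J1 I2 J2 : finType) (F : op I1 -> op J1) (G : op I2 -> op J2) :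
  linmap F -> linmap G -> linmap (maptens F G).
Proof.
move=> hF hG c Z1 Z2 a b; rewrite /maptens (lin_fun (linmap_ampl_r (K:=I1) hG)).
exact: (linmap_ampl_l (K:=J2) hF).
Qed.

Lemma linmap_sum (I J : finType) (T : Type) (r : seq T) (c : T -> C) (F : T -> op I -> op J) :
  (forall t, linmap (F t)) -> linmap (fun Z a b => \sum_(t <- r) c t * F t Z a b).
Proof.
move=> hF x Z1 Z2 a b; rewrite mulr_sumr -big_split /=; apply: eq_bigr => t _.
by rewrite hF; ring.
Qed.

Lemma linmap_scale (I J : finType) (c : C) (F : op I -> op J) :
  linmap F -> linmap (fun Z a b => c * F Z a b).
Proof. by move=> hF x Z1 Z2 a b; rewrite hF; ring. Qed.

Lemma maptens_tens (I1 J1 I2 J2 : finType) (F : op I1 -> op J1) (G : op I2 -> op J2) Z1 Z2 :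
  linmap F -> linmap G -> maptens F G (tens Z1 Z2) = tens (F Z1) (G Z2).
Proof.
move=> hF hG; apply: opE => u v.
rewrite /maptens /ampl_l /ampl_r /tens /=.
have -> : (fun i j => G (fun k l => Z1 i j * Z2 k l) u.2 v.2) = (fun i j => G Z2 u.2 v.2 * Z1 i j).
  by apply: opE => i j; rewrite (linZ hG) mulrC.
by rewrite (linZ hF) mulrC.
Qed.

End L.

Section L2.
Variable R : realType.
Local Notation C := R[i].
Local Notation op := (op R).

Lemma qf_sum (I : finType) (T : Type) (r : seq T) (c : T -> C) (K : T -> op I) v :
  qf (fun i j => \sum_(t <- r) c t * K t i j) v = \sum_(t <- r) c t * qf (K t) v.
Proof.
rewrite /qf.
under eq_bigr => i _ do under eq_bigr => j _ do rewrite mulr_sumr mulr_suml.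
under eq_bigr => i _ do rewrite exchange_big.
rewrite exchange_big; apply: eq_bigr => t _.
rewrite mulr_sumr; apply: eq_bigr => i _.
rewrite mulr_sumr; apply: eq_bigr => j _; ring.
Qed.

Lemma psd_sum (I : finType) (T : Type) (r : seq T) (c : T -> C) (K : T -> op I) :
  (forall t, 0 <= c t) -> (forall t, psd (K t)) ->
  psd (fun i j => \sum_(t <- r) c t * K t i j).
Proof.
move=> hc hK v; rewrite -/(qf _ _) qf_sum; apply: sumr_ge0 => t _.
by apply: mulr_ge0 => //; apply: hK.
Qed.

Lemma psd_scale (I : finType) (c : C) (S : op I) :
  0 <= c -> psd S -> psd (fun i j => c * S i j).
Proof.
move=> hc hS.
have -> : (fun i j => c * S i j) = (fun i j => \sum_(t <- [:: tt]) c * S i j).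
  by apply: opE => i j; rewrite big_cons big_nil addr0.
by apply: psd_sum.
Qed.

Lemma psd_ketbra (I : finType) (i : I) : psd (@ketbra R I i i).
Proof.
move=> v; rewrite -/(qf _ _) /ketbra.
have -> : qf (fun a b => (a == i)%:R * (b == i)%:R) v = (v i)^* * v i.
  rewrite /qf (bigD1 i) //= [X in _ + X]big1 ?addr0; last first.
    by move=> k /negbTE ->; rewrite big1 // => j _; rewrite !mul0r mulr0 mul0r.
  rewrite (bigD1 i) //= [X in _ + X]big1 ?addr0; last first.
    by move=> k /negbTE ->; rewrite !mulr0 mul0r.
  by rewrite eqxx !mulr1.
by rewrite mulrC mul_conjC_ge0.
Qed.

Lemma sum_mul2 (I J : finType) (a : I -> C) (w : C) (b : J -> C) :
  (\sum_i a i) * w * (\sum_j b j) = \sum_i \sum_j a i * w * b j.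
Proof.
rewrite mulr_suml mulr_suml; apply: eq_bigr => i _; by rewrite mulr_sumr.
Qed.

Lemma qf_relabel (S S' : finType) (f : S' -> S) (W : op S) v :
  qf (relabel f W) v = qf W (fun s => \sum_s' (f s' == s)%:R * v s').
Proof.
rewrite /qf /relabel.
under [RHS]eq_bigr => s _ do under eq_bigr => t _ do
  rewrite rmorph_sum sum_mul2.
under [RHS]eq_bigr => s _ do rewrite exchange_big /=.
rewrite [RHS]exchange_big /=; apply: eq_bigr => s' _.
under [RHS]eq_bigr => s _ do rewrite exchange_big /=.
rewrite [RHS]exchange_big /=; apply: eq_bigr => t' _.
rewrite (bigD1 (f s')) //= [X in _ + X]big1 ?addr0; last first.
  move=> s hs; apply: big1 => t _.
  by rewrite rmorphM /= rmorph_nat eq_sym (negbTE hs) !mul0r.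
rewrite (bigD1 (f t')) //= [X in _ + X]big1 ?addr0; last first.
  move=> t ht; by rewrite eq_sym (negbTE ht) mul0r mulr0.
rewrite !eqxx rmorphM /= rmorph_nat !mul1r; ring.
Qed.

Lemma psd_relabel (S S' : finType) (f : S' -> S) (W : op S) :
  psd W -> psd (relabel f W).
Proof. by move=> hW v; rewrite -/(qf _ _) qf_relabel; apply: hW. Qed.

Lemma CP_psd (I J : finType) (F : op I -> op J) W : CP F -> psd W -> psd (F W).
Proof.
move=> hF hW v.
pose P : op ('I_1 * I)%type := fun p q => W p.2 q.2.
have hP : psd P.
  move=> u; rewrite -/(qf _ _).
  have -> : P = relabel (fun p : 'I_1 * I => p.2) W by [].
  by rewrite qf_relabel; apply: hW.
have := hF 1%N P hP (fun p => v p.2); rewrite -/(qf _ _).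
have -> : ampl_r F P = relabel (fun p : 'I_1 * J => p.2) (F W) by [].
rewrite qf_relabel -/(qf _ _).
suff -> : (fun s => \sum_(s' : 'I_1 * J) (s'.2 == s)%:R * v s'.2) = v by [].
apply: functional_extensionality => s; rewrite sum_pair big_ord1.
by rewrite (bigD1 s) //= eqxx mul1r big1 ?addr0 // => j /negbTE ->; rewrite mul0r.
Qed.

Lemma tr_ge0 (I : finType) (S : op I) : psd S -> 0 <= tr S.
Proof. by move=> hS; apply: sumr_ge0 => i _; apply: psd_diag. Qed.

Lemma tr_tens (I J : finType) (S1 : op I) (S2 : op J) : tr (tens S1 S2) = tr S1 * tr S2.
Proof.
rewrite /tr /tens sum_pair mulr_suml; apply: eq_bigr => i _.
by rewrite mulr_sumr.
Qed.

Lemma tr_ketbra (I : finType) (i : I) : tr (@ketbra R I i i) = 1.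
Proof.
rewrite /tr /ketbra (bigD1 i) //= eqxx mulr1 big1 ?addr0 // => j /negbTE ->.
by rewrite mul0r.
Qed.

Lemma density_ketbra (I : finType) (i : I) : density (@ketbra R I i i).
Proof. by split; [apply: psd_ketbra | apply: tr_ketbra]. Qed.

Lemma ketbra_pair (I J : finType) (i i' : I) (j j' : J) :
  @ketbra R _ (i, j) (i', j') = tens (ketbra R i i') (ketbra R j j').
Proof.
apply: opE => -[a b] [a' b']; rewrite /ketbra /tens /= !xpair_eqE.
by rewrite -!mulnb !natrM; ring.
Qed.

Definition MP (I J : finType) (beta : I -> op J) : op I -> op J :=
  fun Z a b => \sum_x Z x x * beta x a b.

Lemma MP_ketbra (I J : finType) (beta : I -> op J) i i' :
  MP beta (ketbra R i i') = fun a b => (i == i')%:R * beta i a b.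
Proof.
apply: opE => a b; rewrite /MP /ketbra.
rewrite (bigD1 i) //= eqxx mul1r big1 ?addr0 => [|x /negbTE ->]; last by rewrite !mul0r.
by rewrite eq_sym.
Qed.

Lemma MP_channel (kI kO : kind) (I J : finType) (beta : I -> op J) :
  (forall x, psd (beta x)) -> (forall x, tr (beta x) = 1) ->
  (kO = KC -> forall x a b, a != b -> beta x a b = 0) ->
  channel kI kO (MP beta).
Proof.
move=> hp ht hd; split; first split.
- move=> c Z1 Z2 a b; rewrite /MP mulr_sumr -big_split /=; apply: eq_bigr => x _; ring.
- move=> k P hP.
  have -> : ampl_r (MP beta) P = fun p q => \sum_(x <- index_enum I) 1 *
       tens (relabel (fun r : 'I_k => (r, x)) P) (beta x) p q.
    by apply: opE => p q; apply: eq_bigr => x _; rewrite mul1r.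
  apply: psd_sum => // x; apply: psd_tens => //; exact: psd_relabel.
- move=> Z; rewrite /tr /MP exchange_big /=; apply: eq_bigr => x _.
  by rewrite -mulr_sumr -/(tr _) ht mulr1.
- move=> _ i j a b nij; rewrite MP_ketbra (negbTE nij) mul0r //.
- move=> hk Z a b nab; rewrite /MP big1 // => x _; rewrite hd // mulr0 //.
Qed.

Lemma fallback_channel (kI kO : kind) (I J : finType) (a0 : J) :
  channel kI kO (MP (fun _ : I => @ketbra R J a0 a0)).
Proof.
apply: MP_channel => [x|x|_ x a b nab]; [exact: psd_ketbra | exact: tr_ketbra |].
rewrite /ketbra; have [ea|na] := eqVneq a a0; last by rewrite mul0r.
by subst; rewrite eq_sym (negbTE nab) mulr0.
Qed.

End L2.

Section L3.
Variable R : realType.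
Local Notation C := R[i].
Local Notation op := (op R).

Lemma normalize (kI kO : kind) (I J : finType) (F : op I -> op J) (i0 : I) (a0 : J) (w : C) :
  (forall i i', i != i' -> forall a b, F (ketbra R i i') a b = 0) ->
  (forall i, psd (F (ketbra R i i))) ->
  (forall i, tr (F (ketbra R i i)) = w) ->
  (kO = KC -> forall i a b, a != b -> F (ketbra R i i) a b = 0) ->
  0 <= w /\ exists G, channel kI kO G /\
     forall i i' a b, F (ketbra R i i') a b = w * G (ketbra R i i') a b.
Proof.
move=> hoff hpsd htr hdiag.
split; first by rewrite -(htr i0); apply: tr_ge0.
have [w0|wn0] := eqVneq w 0.
  exists (MP (fun _ : I => ketbra R a0 a0)); split; first exact: fallback_channel.
  move=> i i' a b; rewrite w0 mul0r.
  have [<-|nii] := eqVneq i i'; last exact: hoff.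
  by apply: psd_tr0 => //; rewrite htr.
exists (MP (fun i a b => w^-1 * F (ketbra R i i) a b)); split.
  apply: MP_channel => [x|x|hk x a b nab].
  - by apply: psd_scale => //; rewrite invr_ge0 -(htr i0); apply: tr_ge0.
  - by rewrite /tr -mulr_sumr -/(tr _) htr mulVf.
  - by rewrite hdiag // mulr0.
move=> i i' a b; rewrite MP_ketbra.
have [<-|nii] := eqVneq i i'; last by rewrite hoff // mul0r mulr0.
by rewrite mul1r mulrA mulfV // mul1r.
Qed.

Lemma lin_ext (I J : finType) (T1 T2 : op I -> op J) :
  linmap T1 -> linmap T2 -> (forall i j, T1 (ketbra R i j) = T2 (ketbra R i j)) ->
  forall Z, T1 Z = T2 Z.
Proof.
move=> h1 h2 h Z.
have eZ : Z = fun x y => \sum_(p <- index_enum (prod I I)) Z p.1 p.2 * ketbra R p.1 p.2 x y.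
  apply: opE => x y; rewrite -/(\sum_(p : prod I I) _) sum_pair /= /ketbra.
  rewrite (bigD1 x) //= [X in _ + X]big1 ?addr0; last first.
    by move=> i /negbTE hi; apply: big1 => j _; rewrite eq_sym hi !mul0r mulr0.
  rewrite (bigD1 y) //= [X in _ + X]big1 ?addr0; last first.
    by move=> j /negbTE hj; rewrite eq_sym hj !mulr0.
  by rewrite !eqxx !mulr1.
rewrite eZ (lin_sum h1) (lin_sum h2); apply: opE => a b.
by apply: eq_bigr => p _; rewrite h.
Qed.

Lemma sum_enum (T : finType) (F : T -> C) : \sum_(k < #|T|) F (enum_val k) = \sum_t F t.
Proof. by rewrite -big_enum_val; apply: eq_bigl => t; rewrite inE. Qed.

Lemma assemble (kX kY kA kB : kind) (X Y A B : finType) (T : op (X * Y)%type -> op (A * B)%type)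
  (Tt : finType) (FA : Tt -> op X -> op A) (FB : Tt -> op Y -> op B) (wA wB : Tt -> C)
  (GA : Tt -> op X -> op A) (GB : Tt -> op Y -> op B) (x0 : X) (y0 : Y) :
  linmap T ->
  (forall i i' j j', T (tens (ketbra R i i') (ketbra R j j')) =
     fun u v => \sum_t tens (FA t (ketbra R i i')) (FB t (ketbra R j j')) u v) ->
  (forall t, 0 <= wA t) -> (forall t, 0 <= wB t) ->
  (forall t, channel kX kA (GA t)) -> (forall t, channel kY kB (GB t)) ->
  (forall t i i' a b, FA t (ketbra R i i') a b = wA t * GA t (ketbra R i i') a b) ->
  (forall t j j' a b, FB t (ketbra R j j') a b = wB t * GB t (ketbra R j j') a b) ->
  tr (T (tens (ketbra R x0 x0) (ketbra R y0 y0))) = 1 ->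
  LOSR_free kX kY kA kB T.
Proof.
move=> hT hdec hwA hwB hGA hGB hFA hFB htr.
have key : forall i i' j j', T (tens (ketbra R i i') (ketbra R j j')) =
   fun u v => \sum_t wA t * wB t * tens (GA t (ketbra R i i')) (GB t (ketbra R j j')) u v.
  move=> i i' j j'; rewrite hdec; apply: opE => u v; apply: eq_bigr => t _.
  by rewrite /tens hFA hFB; ring.
exists #|Tt|, (fun k => wA (enum_val k) * wB (enum_val k)),
  (fun k => GA (enum_val k)), (fun k => GB (enum_val k)); split.
- split; first by move=> k; apply: mulr_ge0.
  rewrite (sum_enum (fun t => wA t * wB t)) -htr key /tr.
  rewrite exchange_big /=; apply: eq_bigr => t _.
  rewrite -mulr_sumr -/(tr _) tr_tens.
  have [[_ _ tpA] _ _] := hGA t; have [[_ _ tpB] _ _] := hGB t.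
  by rewrite tpA tpB !tr_ketbra !mulr1.
- by move=> k; split.
move=> Z u v.
pose T2 := fun (Z : op (X * Y)%type) (u v : (A * B)%type) => \sum_(k < #|Tt|)
   wA (enum_val k) * wB (enum_val k) * maptens (GA (enum_val k)) (GB (enum_val k)) Z u v.
have hT2 : linmap T2.
  apply: linmap_sum => k; apply: linmap_maptens.
    by have [[]] := hGA (enum_val k).
  by have [[]] := hGB (enum_val k).
suff -> : T Z = T2 Z by [].
apply: lin_ext => // -[i j] [i' j'].
rewrite ketbra_pair key /T2; apply: opE => a b.
rewrite -(sum_enum (fun t => wA t * wB t * tens (GA t (ketbra R i i')) (GB t (ketbra R j j')) a b)).
apply: eq_bigr => k _; rewrite maptens_tens //.
  by have [[]] := hGA (enum_val k).
by have [[]] := hGB (enum_val k).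
Qed.

End L3.

Section L4.
Variable R : realType.
Local Notation C := R[i].
Local Notation op := (op R).

Definition Kr (A M X : finType) (a : A) (x : X) (G : op (X * M)%type) : op (A * M)%type :=
  fun s t => (s.1 == a)%:R * (t.1 == a)%:R * G (x, s.2) (x, t.2).

Lemma Kr_lin (A M X : finType) (a : A) (x : X) : linmap (@Kr A M X a x).
Proof. by move=> c Z1 Z2 u v; rewrite /Kr; ring. Qed.

Lemma Kr_tens (A M X : finType) (a : A) (x : X) (G : op (X * M)%type) :
  Kr a x G = tens (ketbra R a a) (relabel (fun m => (x, m)) G).
Proof. by apply: opE => s t; rewrite /Kr /tens /ketbra /relabel. Qed.

Lemma Kr_psd (A M X : finType) (a : A) (x : X) (G : op (X * M)%type) :
  psd G -> psd (Kr a x G).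
Proof.
move=> hG; rewrite Kr_tens; apply: psd_tens; [exact: psd_ketbra | exact: psd_relabel].
Qed.

Lemma Kr_tr (A M X : finType) (a : A) (x : X) (G : op (X * M)%type) :
  tr (Kr a x G) = \sum_m G (x, m) (x, m).
Proof. by rewrite Kr_tens tr_tens tr_ketbra mul1r. Qed.

Definition Pb (X Y A B : finType) (Rs : op (X * Y)%type -> op (A * B)%type)
  (x : X) (y : Y) (a : A) (b : B) : C := Rs (ketbra R (x, y) (x, y)) (a, b) (a, b).

Definition Mid (X Y A B MA MB : finType) (Rs : op (X * Y)%type -> op (A * B)%type)
  (G : op (X * MA)%type) (H : op (Y * MB)%type) : op ((A * MA) * (B * MB))%type :=
  relabel (@sw_out A B MA MB) (ampl_l Rs (relabel (@sw_in X Y MA MB) (tens G H))).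

Lemma Mid_eq (X Y A B MA MB : finType) (Rs : op (X * Y)%type -> op (A * B)%type)
  (G : op (X * MA)%type) (H : op (Y * MB)%type) s t :
  Mid Rs G H s t = Rs (fun i j => G (i.1, s.1.2) (j.1, t.1.2) * H (i.2, s.2.2) (j.2, t.2.2))
     (s.1.1, s.2.1) (t.1.1, t.2.1).
Proof. by []. Qed.

Lemma sum_pair4 (X Y A B : finType) (F : (((X * Y) * A) * B)%type -> C) :
  \sum_q F q = \sum_x \sum_y \sum_a \sum_b F (((x, y), a), b).
Proof.
by rewrite sum_pair sum_pair sum_pair.
Qed.

Lemma box_mid (X Y A B MA MB : finType) (Rs : op (X * Y)%type -> op (A * B)%type)
  (G : op (X * MA)%type) (H : op (Y * MB)%type) :
  linmap Rs ->
  (forall x x' m m', x != x' -> G (x, m) (x', m') = 0) ->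
  (forall y y' n n', y != y' -> H (y, n) (y', n') = 0) ->
  (forall x y a a' b b', (a != a') || (b != b') ->
      Rs (ketbra R (x, y) (x, y)) (a, b) (a', b') = 0) ->
  Mid Rs G H = fun s t => \sum_(q : ((X * Y) * A) * B)
     Pb Rs q.1.1.1 q.1.1.2 q.1.2 q.2 * tens (Kr q.1.2 q.1.1.1 G) (Kr q.2 q.1.1.2 H) s t.
Proof.
move=> hlin hG hH hout; apply: opE => -[[a1 m] [b1 n]] [[a2 m'] [b2 n']].
rewrite Mid_eq /=.
have -> : (fun i j : X * Y => G (i.1, m) (j.1, m') * H (i.2, n) (j.2, n')) =
   fun i j => \sum_(p <- index_enum (prod X Y))
      (G (p.1, m) (p.1, m') * H (p.2, n) (p.2, n')) * ketbra R p p i j.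
  apply: opE => -[x1 y1] [x2 y2] /=.
  rewrite -/(\sum_(p : prod X Y) _) (bigD1 (x1, y1)) //= [X in _ + X]big1 ?addr0; last first.
    by move=> p hp; rewrite /ketbra eq_sym (negbTE hp) mul0r mulr0.
  rewrite /ketbra eqxx mul1r.
  have [e|ne] := eqVneq (x2, y2) (x1, y1); first by case: e => -> ->; rewrite mulr1.
  rewrite mulr0; move: ne; rewrite xpair_eqE negb_and => /orP [nx|ny].
    by rewrite hG ?mul0r // eq_sym.
  by rewrite hH ?mulr0 // eq_sym.
rewrite (lin_sum hlin) -/(\sum_(p : prod X Y) _) sum_pair.
rewrite [RHS]sum_pair4; apply: eq_bigr => x _; apply: eq_bigr => y _ /=.
rewrite (bigD1 a1) //= [X in _ + X]big1 ?addr0; last first.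
  by move=> a; rewrite eq_sym => /negbTE ha; apply: big1 => b _; rewrite /tens /Kr /= ha !mul0r mulr0.
rewrite (bigD1 b1) //= [X in _ + X]big1 ?addr0; last first.
  by move=> b; rewrite eq_sym => /negbTE hb; rewrite /tens /Kr /= hb !mul0r !mulr0.
rewrite /tens /Kr /Pb /= !eqxx !mul1r.
have [ea|na] := eqVneq a2 a1; last first.
  by rewrite hout ?(eq_sym a1) ?na // mulr0 !mul0r mulr0.
have [eb|nb] := eqVneq b2 b1; last first.
  by rewrite hout ?(eq_sym b1) ?nb ?orbT // mulr0 !mul0r !mulr0.
subst.
have -> : (fun x0 : X * Y => [eta ketbra R (x, y) (x, y) x0]) = ketbra R (x, y) (x, y) by [].
rewrite !mul1r; ring.
Qed.

End L4.

Section L5.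
Variable R : realType.
Local Notation C := R[i].
Local Notation op := (op R).

Definition Lr (X Y A B M : finType) (Rs : op (X * Y)%type -> op (A * B)%type) (y0 : Y)
  (a : A) (x : X) (H : op (Y * M)%type) : op (B * M)%type :=
  fun s t => Rs (ketbra R (x, y0) (x, y0)) (a, s.1) (a, t.1) * H (y0, s.2) (y0, t.2).

Lemma Lr_lin (X Y A B M : finType) (Rs : op (X * Y)%type -> op (A * B)%type) y0 a x :
  linmap (@Lr X Y A B M Rs y0 a x).
Proof. by move=> c Z1 Z2 u v; rewrite /Lr; ring. Qed.

Lemma Lr_psd (X Y A B M : finType) (Rs : op (X * Y)%type -> op (A * B)%type) y0 a x
  (H : op (Y * M)%type) : CP Rs -> psd H -> psd (Lr Rs y0 a x H).
Proof.
move=> hcp hH.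
have -> : Lr Rs y0 a x H = tens (relabel (fun b => (a, b)) (Rs (ketbra R (x, y0) (x, y0))))
    (relabel (fun n => (y0, n)) H) by [].
apply: psd_tens; apply: psd_relabel => //; apply: CP_psd => //; exact: psd_ketbra.
Qed.

Lemma asm_mid (X Y A B MA MB : finType) (Rs : op (X * Y)%type -> op (A * B)%type)
  (G : op (X * MA)%type) (H : op (Y * MB)%type) (y0 : Y) :
  linmap Rs ->
  (forall x x' m m', x != x' -> G (x, m) (x', m') = 0) ->
  (forall y : Y, y = y0) ->
  (forall x a a' b b', a != a' -> Rs (ketbra R (x, y0) (x, y0)) (a, b) (a', b') = 0) ->
  Mid Rs G H = fun s t => \sum_(q : X * A)
     1 * tens (Kr q.2 q.1 G) (Lr Rs y0 q.2 q.1 H) s t.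
Proof.
move=> hlin hG hy hout; apply: opE => -[[a1 m] [b1 n]] [[a2 m'] [b2 n']].
rewrite Mid_eq /=.
have -> : (fun i j : X * Y => G (i.1, m) (j.1, m') * H (i.2, n) (j.2, n')) =
   fun i j => \sum_(x <- index_enum X)
      (G (x, m) (x, m') * H (y0, n) (y0, n')) * ketbra R (x, y0) (x, y0) i j.
  apply: opE => -[x1 y1] [x2 y2] /=; rewrite (hy y1) (hy y2).
  rewrite -/(\sum_(x : X) _) (bigD1 x1) //= [X in _ + X]big1 ?addr0; last first.
    move=> x hx; rewrite /ketbra xpair_eqE eq_sym (negbTE hx) /=.
    by rewrite mul0r mulr0.
  rewrite /ketbra !xpair_eqE !eqxx /= andbT mul1r.
  have [e|ne] := eqVneq x2 x1; first by rewrite e mulr1.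
  by rewrite mulr0 hG ?mul0r // eq_sym.
rewrite (lin_sum hlin) -/(\sum_(x : X) _) sum_pair; apply: eq_bigr => x _.
rewrite (bigD1 a1) //= [X in _ + X]big1 ?addr0; last first.
  by move=> a; rewrite eq_sym => /negbTE ha; rewrite /tens /Kr /= ha !mul0r mulr0.
rewrite /tens /Kr /Lr /= !eqxx !mul1r.
have [ea|na] := eqVneq a2 a1; last first.
  by rewrite hout ?(eq_sym a1) ?na // mulr0 mul0r mul0r.
subst.
have -> : (fun x0 : X * Y => [eta ketbra R (x, y0) (x, y0) x0]) = ketbra R (x, y0) (x, y0) by [].
rewrite mul1r; ring.
Qed.

Lemma tens_suml (I J : finType) (T : Type) (r : seq T) (F : T -> op I) (G : op J) u v :
  tens (fun a b => \sum_(k <- r) F k a b) G u v = \sum_(k <- r) tens (F k) G u v.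
Proof. by rewrite /tens mulr_suml. Qed.

Lemma tens_scalel (I J : finType) (c : C) (F : op I) (G : op J) u v :
  c * tens F G u v = tens (fun a b => c * F a b) G u v.
Proof. by rewrite /tens mulrA. Qed.

Lemma tau_tens (X Y A B X' Y' A' B' MA MB : finType) (n : nat) (p : 'I_n -> C)
  (PA : 'I_n -> op X' -> op (X * MA)%type) (PB : 'I_n -> op Y' -> op (Y * MB)%type)
  (EA : 'I_n -> op (A * MA)%type -> op A') (EB : 'I_n -> op (B * MB)%type -> op B')
  (Rs : op (X * Y)%type -> op (A * B)%type) (Q : finType) (c : Q -> C)
  (KA : Q -> op (X * MA)%type -> op (A * MA)%type) (KB : Q -> op (Y * MB)%type -> op (B * MB)%type)
  (xi : op X') (psi : op Y') :
  (forall l, linmap (PA l)) -> (forall l, linmap (PB l)) ->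
  (forall l, linmap (EA l)) -> (forall l, linmap (EB l)) ->
  (forall l, Mid Rs (PA l xi) (PB l psi) =
     fun s t => \sum_q c q * tens (KA q (PA l xi)) (KB q (PB l psi)) s t) ->
  tau p PA PB EA EB Rs (tens xi psi) = fun u v => \sum_l \sum_q
     (p l * c q) * tens (EA l (KA q (PA l xi))) (EB l (KB q (PB l psi))) u v.
Proof.
move=> hPA hPB hEA hEB hmid; apply: opE => u v; rewrite /tau.
apply: eq_bigr => l _.
rewrite maptens_tens // -/(Mid Rs (PA l xi) (PB l psi)) hmid.
rewrite (lin_sum (linmap_maptens (hEA l) (hEB l)) (index_enum Q) c
   (fun q => tens (KA q (PA l xi)) (KB q (PB l psi)))).
rewrite mulr_sumr; apply: eq_bigr => q _.
by rewrite maptens_tens // mulrA.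
Qed.

End L5.

Section L6.
Variable R : realType.
Local Notation C := R[i].
Local Notation op := (op R).

Definition normch (I J : finType) (F : op I -> op J) (a0 : J) (w : C) : op I -> op J :=
  if w == 0 then MP (fun _ : I => ketbra R a0 a0)
  else MP (fun i a b => w^-1 * F (ketbra R i i) a b).

Lemma normch_spec (kI kO : kind) (I J : finType) (F : op I -> op J) (i0 : I) (a0 : J) (w : C) :
  (forall i i', i != i' -> forall a b, F (ketbra R i i') a b = 0) ->
  (forall i, psd (F (ketbra R i i))) ->
  (forall i, tr (F (ketbra R i i)) = w) ->
  (kO = KC -> forall i a b, a != b -> F (ketbra R i i) a b = 0) ->
  [/\ 0 <= w, channel kI kO (normch F a0 w) &
     forall i i' a b, F (ketbra R i i') a b = w * normch F a0 w (ketbra R i i') a b].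
Proof.
move=> hoff hpsd htr hdiag.
have w0 : 0 <= w by rewrite -(htr i0); apply: tr_ge0.
rewrite /normch; have [wz|wn0] := eqVneq w 0.
  split => //; first exact: fallback_channel.
  move=> i i' a b; rewrite wz mul0r.
  have [<-|nii] := eqVneq i i'; last exact: hoff.
  by apply: psd_tr0 => //; rewrite htr.
split => //.
  apply: MP_channel => [x|x|hk x a b nab].
  - by apply: psd_scale => //; rewrite invr_ge0.
  - by rewrite /tr -mulr_sumr -/(tr _) htr mulVf.
  - by rewrite hdiag // mulr0.
move=> i i' a b; rewrite MP_ketbra.
have [<-|nii] := eqVneq i i'; last by rewrite hoff // mul0r mulr0.
by rewrite mul1r mulrA mulfV // mul1r.
Qed.

Lemma res_out_box (X Y A B : finType) (Rs : op (X * Y)%type -> op (A * B)%type) :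
  resource KC KC KC KC Rs ->
  forall x y a a' b b', (a != a') || (b != b') ->
      Rs (ketbra R (x, y) (x, y)) (a, b) (a', b') = 0.
Proof.
case=> _ [_ [_ [_ [_ [hclA [hclB _]]]]]] x y a a' b b' /orP [h|h]; rewrite ketbra_pair.
  by apply: hclA => //; apply: density_ketbra.
by apply: hclB => //; apply: density_ketbra.
Qed.

Lemma Pb_ge0 (X Y A B : finType) (Rs : op (X * Y)%type -> op (A * B)%type) x y a b :
  CP Rs -> 0 <= Pb Rs x y a b.
Proof. by move=> hcp; apply: psd_diag; apply: CP_psd => //; apply: psd_ketbra. Qed.

End L6.

Section L7.
Variable R : realType.
Local Notation C := R[i].
Local Notation op := (op R).

Lemma case1 (X Y A B X' Y' A' B' MA MB : finType) (n : nat) (p : 'I_n -> C)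
  (PA : 'I_n -> op X' -> op (X * MA)%type) (PB : 'I_n -> op Y' -> op (Y * MB)%type)
  (EA : 'I_n -> op (A * MA)%type -> op A') (EB : 'I_n -> op (B * MB)%type -> op B') :
  #|X'| = 1%N -> #|Y'| = 1%N -> (0 < #|A'|)%N -> (0 < #|B'|)%N ->
  LOSR_free_transformation KC KC KC KC KI KI KQ KQ p PA PB EA EB ->
  forall Rs : op (X * Y)%type -> op (A * B)%type,
    resource KC KC KC KC Rs ->
    LOSR_free KI KI KQ KQ (tau p PA PB EA EB Rs).
Proof.
move=> hX' hY' hA' hB' [hp [hPA hPB hEA hEB hres]] Rs hR.
have hT := hres Rs hR.
have hout := res_out_box hR.
case: hR => hlin [hcp _].
have [x0 hx0] := fintype1 hX'; have [y0 hy0] := fintype1 hY'.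
have /card_gt0P [a0 _] := hA'; have /card_gt0P [b0 _] := hB'.
have lPA l : linmap (PA l) by have [[]] := hPA l.
have lPB l : linmap (PB l) by have [[]] := hPB l.
have lEA l : linmap (EA l) by have [[]] := hEA l.
have lEB l : linmap (EB l) by have [[]] := hEB l.
have cPA l : CP (PA l) by have [[]] := hPA l.
have cPB l : CP (PB l) by have [[]] := hPB l.
have cEA l : CP (EA l) by have [[]] := hEA l.
have cEB l : CP (EB l) by have [[]] := hEB l.
have dPA l : forall Z x x' m m', x != x' -> PA l Z (x, m) (x', m') = 0.
  by have [_ _ h] := hPA l; apply: h.
have dPB l : forall Z y y' m m', y != y' -> PB l Z (y, m) (y', m') = 0.
  by have [_ _ h] := hPB l; apply: h.
pose Tt := ('I_n * (((X * Y) * A) * B))%type.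
pose FA (t : Tt) := fun (xi : op X') (a b : A') =>
  (p t.1 * Pb Rs t.2.1.1.1 t.2.1.1.2 t.2.1.2 t.2.2) * EA t.1 (Kr t.2.1.2 t.2.1.1.1 (PA t.1 xi)) a b.
pose FB (t : Tt) := fun (psi : op Y') => EB t.1 (Kr t.2.2 t.2.1.1.2 (PB t.1 psi)).
pose wA t := tr (FA t (ketbra R x0 x0)).
pose wB t := tr (FB t (ketbra R y0 y0)).
have sA t := @normch_spec R KI KQ _ _ (FA t) x0 a0 (wA t).
have sB t := @normch_spec R KI KQ _ _ (FB t) y0 b0 (wB t).
have nA t : [/\ 0 <= wA t, channel KI KQ (normch (FA t) a0 (wA t)) &
     forall i i' a b, FA t (ketbra R i i') a b = wA t * normch (FA t) a0 (wA t) (ketbra R i i') a b].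
  apply: sA.
  - by move=> i i'; rewrite (hx0 i) (hx0 i') eqxx.
  - move=> i; apply: psd_scale.
      by apply: mulr_ge0; [case: hp => + _; apply | apply: Pb_ge0].
    apply: CP_psd => //; apply: Kr_psd; apply: CP_psd => //; exact: psd_ketbra.
  - by move=> i; rewrite (hx0 i).
  - by [].
have nB t : [/\ 0 <= wB t, channel KI KQ (normch (FB t) b0 (wB t)) &
     forall i i' a b, FB t (ketbra R i i') a b = wB t * normch (FB t) b0 (wB t) (ketbra R i i') a b].
  apply: sB.
  - by move=> i i'; rewrite (hy0 i) (hy0 i') eqxx.
  - move=> i; rewrite /FB; apply: CP_psd => //; apply: Kr_psd; apply: CP_psd => //; exact: psd_ketbra.
  - by move=> i; rewrite (hy0 i).
  - by [].
have [hTlin [_ [hTtr _]]] := hT.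
apply: (@assemble _ _ _ _ _ _ _ _ _ _ _ FA FB wA wB
   (fun t => normch (FA t) a0 (wA t)) (fun t => normch (FB t) b0 (wB t)) x0 y0 hTlin).
- move=> i i' j j'.
  rewrite (@tau_tens _ _ _ _ _ _ _ _ _ _ _ n p PA PB EA EB Rs _
     (fun q : ((X * Y) * A) * B => Pb Rs q.1.1.1 q.1.1.2 q.1.2 q.2)
     (fun q G => Kr q.1.2 q.1.1.1 G) (fun q H => Kr q.2 q.1.1.2 H)) //.
    apply: opE => u v; rewrite sum_pair; apply: eq_bigr => l _; apply: eq_bigr => q _.
    by rewrite tens_scalel.
  move=> l; apply: box_mid => //; [exact: dPA | exact: dPB].
- by move=> t; case: (nA t).
- by move=> t; case: (nB t).
- by move=> t; case: (nA t).
- by move=> t; case: (nB t).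
- by move=> t; case: (nA t).
- by move=> t; case: (nB t).
- by apply: hTtr; apply: density_ketbra.
Qed.

End L7.

Section L8.
Variable R : realType.
Local Notation C := R[i].
Local Notation op := (op R).

Lemma case3 (X Y A B X' Y' A' B' MA MB : finType) (n : nat) (p : 'I_n -> C)
  (PA : 'I_n -> op X' -> op (X * MA)%type) (PB : 'I_n -> op Y' -> op (Y * MB)%type)
  (EA : 'I_n -> op (A * MA)%type -> op A') (EB : 'I_n -> op (B * MB)%type -> op B') :
  #|Y| = 1%N -> #|X'| = 1%N -> #|Y'| = 1%N -> (0 < #|A'|)%N -> (0 < #|B'|)%N ->
  LOSR_free_transformation KC KI KC KQ KI KI KQ KQ p PA PB EA EB ->
  forall Rs : op (X * Y)%type -> op (A * B)%type,
    resource KC KI KC KQ Rs ->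
    LOSR_free KI KI KQ KQ (tau p PA PB EA EB Rs).
Proof.
move=> hY hX' hY' hA' hB' [hp [hPA hPB hEA hEB hres]] Rs hR.
have hT := hres Rs hR.
case: hR => hlin [hcp [_ [_ [_ [hclA _]]]]].
have [y0 hy0] := fintype1 hY.
have [x0 hx0] := fintype1 hX'; have [z0 hz0] := fintype1 hY'.
have /card_gt0P [a0 _] := hA'; have /card_gt0P [b0 _] := hB'.
have hout : forall x a a' b b', a != a' -> Rs (ketbra R (x, y0) (x, y0)) (a, b) (a', b') = 0.
  by move=> x a a' b b' h; rewrite ketbra_pair; apply: hclA => //; apply: density_ketbra.
have lPA l : linmap (PA l) by have [[]] := hPA l.
have lPB l : linmap (PB l) by have [[]] := hPB l.
have lEA l : linmap (EA l) by have [[]] := hEA l.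
have lEB l : linmap (EB l) by have [[]] := hEB l.
have cPA l : CP (PA l) by have [[]] := hPA l.
have cPB l : CP (PB l) by have [[]] := hPB l.
have cEA l : CP (EA l) by have [[]] := hEA l.
have cEB l : CP (EB l) by have [[]] := hEB l.
have dPA l : forall Z x x' m m', x != x' -> PA l Z (x, m) (x', m') = 0.
  by have [_ _ h] := hPA l; apply: h.
pose Tt := ('I_n * (X * A))%type.
pose FA (t : Tt) := fun (xi : op X') (a b : A') =>
  (p t.1 * 1) * EA t.1 (Kr t.2.2 t.2.1 (PA t.1 xi)) a b.
pose FB (t : Tt) := fun (psi : op Y') => EB t.1 (Lr Rs y0 t.2.2 t.2.1 (PB t.1 psi)).
pose wA t := tr (FA t (ketbra R x0 x0)).
pose wB t := tr (FB t (ketbra R z0 z0)).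
have sA t := @normch_spec R KI KQ _ _ (FA t) x0 a0 (wA t).
have sB t := @normch_spec R KI KQ _ _ (FB t) z0 b0 (wB t).
have nA t : [/\ 0 <= wA t, channel KI KQ (normch (FA t) a0 (wA t)) &
     forall i i' a b, FA t (ketbra R i i') a b = wA t * normch (FA t) a0 (wA t) (ketbra R i i') a b].
  apply: sA.
  - by move=> i i'; rewrite (hx0 i) (hx0 i') eqxx.
  - move=> i; apply: psd_scale.
      by rewrite mulr1; case: hp => + _; apply.
    apply: CP_psd => //; apply: Kr_psd; apply: CP_psd => //; exact: psd_ketbra.
  - by move=> i; rewrite (hx0 i).
  - by [].
have nB t : [/\ 0 <= wB t, channel KI KQ (normch (FB t) b0 (wB t)) &
     forall i i' a b, FB t (ketbra R i i') a b = wB t * normch (FB t) b0 (wB t) (ketbra R i i') a b].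
  apply: sB.
  - by move=> i i'; rewrite (hz0 i) (hz0 i') eqxx.
  - move=> i; rewrite /FB; apply: CP_psd => //; apply: Lr_psd => //.
    apply: CP_psd => //; exact: psd_ketbra.
  - by move=> i; rewrite (hz0 i).
  - by [].
have [hTlin [_ [hTtr _]]] := hT.
apply: (@assemble _ _ _ _ _ _ _ _ _ _ _ FA FB wA wB
   (fun t => normch (FA t) a0 (wA t)) (fun t => normch (FB t) b0 (wB t)) x0 z0 hTlin).
- move=> i i' j j'.
  rewrite (@tau_tens _ _ _ _ _ _ _ _ _ _ _ n p PA PB EA EB Rs _
     (fun q : X * A => 1)
     (fun q G => Kr q.2 q.1 G) (fun q H => Lr Rs y0 q.2 q.1 H)) //.
    apply: opE => u v; rewrite sum_pair; apply: eq_bigr => l _; apply: eq_bigr => q _.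
    by rewrite tens_scalel.
  move=> l; apply: asm_mid => //; exact: dPA.
- by move=> t; case: (nA t).
- by move=> t; case: (nB t).
- by move=> t; case: (nA t).
- by move=> t; case: (nB t).
- by move=> t; case: (nA t).
- by move=> t; case: (nB t).
- by apply: hTtr; apply: density_ketbra.
Qed.

End L8.

Section L9.
Variable R : realType.
Local Notation C := R[i].
Local Notation op := (op R).

Lemma case2 (X Y A B X' Y' A' B' MA MB : finType) (n : nat) (p : 'I_n -> C)
  (PA : 'I_n -> op X' -> op (X * MA)%type) (PB : 'I_n -> op Y' -> op (Y * MB)%type)
  (EA : 'I_n -> op (A * MA)%type -> op A') (EB : 'I_n -> op (B * MB)%type -> op B') :
  (0 < #|X|)%N -> (0 < #|X'|)%N -> #|Y'| = 1%N -> (0 < #|A'|)%N -> (0 < #|B'|)%N ->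
  LOSR_free_transformation KC KC KC KC KC KI KC KQ p PA PB EA EB ->
  forall Rs : op (X * Y)%type -> op (A * B)%type,
    resource KC KC KC KC Rs ->
    LOSR_free KC KI KC KQ (tau p PA PB EA EB Rs).
Proof.
move=> hX hX' hY' hA' hB' [hp [hPA hPB hEA hEB hres]] Rs hR.
have hT := hres Rs hR.
have hout := res_out_box hR.
case: hR => hlin [hcp [_ [hns _]]].
have /card_gt0P [x0 _] := hX; have /card_gt0P [x'0 _] := hX'.
have [z0 hz0] := fintype1 hY'.
have /card_gt0P [a0 _] := hA'; have /card_gt0P [b0 _] := hB'.
have lPA l : linmap (PA l) by have [[]] := hPA l.
have lPB l : linmap (PB l) by have [[]] := hPB l.
have lEA l : linmap (EA l) by have [[]] := hEA l.
have lEB l : linmap (EB l) by have [[]] := hEB l.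
have cPA l : CP (PA l) by have [[]] := hPA l.
have cPB l : CP (PB l) by have [[]] := hPB l.
have cEA l : CP (EA l) by have [[]] := hEA l.
have cEB l : CP (EB l) by have [[]] := hEB l.
have tPA l : TP (PA l) by have [[]] := hPA l.
have tEA l : TP (EA l) by have [[]] := hEA l.
have dPA l : forall Z x x' m m', x != x' -> PA l Z (x, m) (x', m') = 0.
  by have [_ _ h] := hPA l; apply: h.
have dPB l : forall Z y y' m m', y != y' -> PB l Z (y, m) (y', m') = 0.
  by have [_ _ h] := hPB l; apply: h.
have oPA l : forall i j u v, i != j -> PA l (ketbra R i j) u v = 0.
  by have [_ h _] := hPA l; apply: h.
have oEA l : forall Z u v, u != v -> EA l Z u v = 0.
  by have [_ _ h] := hEA l; apply: h.
have nsP : forall x y b, \sum_a Pb Rs x y a b = \sum_a Pb Rs x0 y a b.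
  move=> x y b; rewrite /Pb !ketbra_pair.
  have := hns (ketbra R x x) (ketbra R x0 x0) (ketbra R y y).
  by move=> /(_ (density_ketbra _ _) (density_ketbra _ _) (density_ketbra _ _) b b).
pose Tt := (('I_n * Y) * B)%type.
pose FA (t : Tt) := fun (xi : op X') (a' b' : A') =>
  \sum_(xa <- index_enum (prod X A)) (p t.1.1 * Pb Rs xa.1 t.1.2 xa.2 t.2) *
     EA t.1.1 (Kr xa.2 xa.1 (PA t.1.1 xi)) a' b'.
pose FB (t : Tt) := fun (psi : op Y') => EB t.1.1 (Kr t.2 t.1.2 (PB t.1.1 psi)).
pose wA (t : Tt) := p t.1.1 * \sum_a Pb Rs x0 t.1.2 a t.2.
pose wB t := tr (FB t (ketbra R z0 z0)).
have sA t := @normch_spec R KC KC _ _ (FA t) x'0 a0 (wA t).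
have sB t := @normch_spec R KI KQ _ _ (FB t) z0 b0 (wB t).
have nA t : [/\ 0 <= wA t, channel KC KC (normch (FA t) a0 (wA t)) &
     forall i i' a b, FA t (ketbra R i i') a b = wA t * normch (FA t) a0 (wA t) (ketbra R i i') a b].
  apply: sA.
  - move=> i i' hii a b; rewrite /FA big1 // => xa _.
    have -> : Kr xa.2 xa.1 (PA t.1.1 (ketbra R i i')) = fun _ _ => 0.
      by apply: opE => u v; rewrite /Kr oPA // mulr0.
    by rewrite (lin0 (lEA _)) mulr0.
  - move=> i; rewrite /FA; apply: psd_sum.
      by move=> xa; apply: mulr_ge0; [case: hp => + _; apply | apply: Pb_ge0].
    move=> xa; apply: CP_psd => //; apply: Kr_psd; apply: CP_psd => //; exact: psd_ketbra.
  - move=> i; rewrite /FA /tr exchange_big /=.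
    under eq_bigr => xa _ do rewrite -mulr_sumr -/(tr _) tEA Kr_tr.
    rewrite -/(\sum_(xa : prod X A) _) sum_pair /=.
    under eq_bigr => x _ do rewrite -mulr_suml -mulr_sumr nsP.
    rewrite -mulr_sumr.
    rewrite -(sum_pair (fun q => PA t.1.1 (ketbra R i i) q q)) -/(tr _) tPA tr_ketbra mulr1.
    by [].
  - by move=> _ i a b hab; rewrite /FA big1 // => xa _; rewrite oEA // mulr0.
have nB t : [/\ 0 <= wB t, channel KI KQ (normch (FB t) b0 (wB t)) &
     forall i i' a b, FB t (ketbra R i i') a b = wB t * normch (FB t) b0 (wB t) (ketbra R i i') a b].
  apply: sB.
  - by move=> i i'; rewrite (hz0 i) (hz0 i') eqxx.
  - move=> i; rewrite /FB; apply: CP_psd => //; apply: Kr_psd; apply: CP_psd => //; exact: psd_ketbra.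
  - by move=> i; rewrite (hz0 i).
  - by [].
have [hTlin [_ [hTtr _]]] := hT.
apply: (@assemble _ _ _ _ _ _ _ _ _ _ _ FA FB wA wB
   (fun t => normch (FA t) a0 (wA t)) (fun t => normch (FB t) b0 (wB t)) x'0 z0 hTlin).
- move=> i i' j j'.
  rewrite (@tau_tens _ _ _ _ _ _ _ _ _ _ _ n p PA PB EA EB Rs _
     (fun q : ((X * Y) * A) * B => Pb Rs q.1.1.1 q.1.1.2 q.1.2 q.2)
     (fun q G => Kr q.1.2 q.1.1.1 G) (fun q H => Kr q.2 q.1.1.2 H)) //.
    apply: opE => u v; rewrite [RHS]sum_pair [RHS]sum_pair; apply: eq_bigr => l _.
    rewrite sum_pair4 exchange_big; apply: eq_bigr => y _.
    under eq_bigr => x _ do rewrite exchange_big.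
    rewrite exchange_big; apply: eq_bigr => b _.
    rewrite [in RHS]/tens /FA mulr_suml -/(\sum_(xa : prod X A) _) sum_pair.
    apply: eq_bigr => x _; apply: eq_bigr => a _; rewrite /tens /FB /=; ring.
  move=> l; apply: box_mid => //; [exact: dPA | exact: dPB].
- by move=> t; case: (nA t).
- by move=> t; case: (nB t).
- by move=> t; case: (nA t).
- by move=> t; case: (nB t).
- by move=> t; case: (nA t).
- by move=> t; case: (nB t).
- by apply: hTtr; apply: density_ketbra.
Qed.

End L9.

Unset Implicit Arguments.

Theorem proposition2 (R : realType)
  (kX kY kA kB kX' kY' kA' kB' : kind)
  (X Y A B X' Y' A' B' MA MB : finType) (n : nat) (p : 'I_n -> R[i])
  (PA : 'I_n -> op R X' -> op R (X * MA)%type) (PB : 'I_n -> op R Y' -> op R (Y * MB)%type)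
  (EA : 'I_n -> op R (A * MA)%type -> op R A') (EB : 'I_n -> op R (B * MB)%type -> op R B') :
  prop2_case kX kY kA kB kX' kY' kA' kB' ->
  systype kX X -> systype kY Y -> systype kA A -> systype kB B ->
  systype kX' X' -> systype kY' Y' -> systype kA' A' -> systype kB' B' ->
  LOSR_free_transformation kX kY kA kB kX' kY' kA' kB' p PA PB EA EB ->
  forall Rs : op R (X * Y)%type -> op R (A * B)%type,
    resource kX kY kA kB Rs ->
    LOSR_free kX' kY' kA' kB' (tau p PA PB EA EB Rs).
Proof.
case=> [[[-> -> -> ->] [-> -> -> ->]] | [[-> -> -> ->] [-> -> -> ->]] |
        [[-> -> -> ->] [-> -> -> ->]]] /= sX sY sA sB sX' sY' sA' sB' htr Rs hR.
- exact: (case1 sX' sY' sA' sB' htr hR).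
- exact: (case2 sX sX' sY' sA' sB' htr hR).
- exact: (case3 sY sX' sY' sA' sB' htr hR).
Qed.
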